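(* Suppose the bandwidth is insufficient, i.e. $BW_{max,EUT}\le\sum_{i\in S_{EUT}}\bar F^{-1}_{B_i}(\lambda_i;b^* )$ with $\lambda_i=w^{-1}(r_{EUT}(b^* )/h_i(b^* ))$, and all users under-weight the service guarantee, i.e. $w(\bar F_{B_i}(b^*;BW_{i,EUT}))<\bar F_{B_i}(b^*;BW_{i,EUT})$ for all $i\in S_{EUT}$. Suppose the SP keeps the strict radio-resource-management constraints (same user set $S_{EUT}$, same rate $b^*$, same total bandwidth $BW_{max,EUT}$ and same allocation $(BW_{i,EUT})$) and charges a new price $r_{PT}(b^* )$ such that every user in $S_{EUT}$ accepts under prospect theory. Then $$r_{EUT}(b^* )-r_{PT}(b^* )>L_{RRM}:=\max_{i\in S_{EUT}}\Big\{r_{EUT}(b^* )-h_i(b^* )\,w\big(\bar F_{B_i}(b^*;BW_{i,EUT})\big)\Big\}\ge 0,$$ so the SP's revenue per user decreases by more than $L_{RRM}$ relative to the EUT equilibrium.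
   Context: A service provider (SP) serves a finite set $S_{EUT}$ of end-users. For each user $i$ there is a benefit function $h_i:(0,\infty)\to(0,\infty)$ and, for each rate $b>0$, a service-guarantee function $BW\mapsto\bar F_{B_i}(b;BW)$ from $[0,\infty)$ to $[0,1)$, continuous and strictly increasing with $\bar F_{B_i}(b;0)=0$. The EUT pricing function is $r_{EUT}:(0,\infty)\to(0,\infty)$. Unit costs $c_1>0$ (rate) and $c_3>0$ (bandwidth); when a set $S$ of users all accept an offer at rate $b$ and price $r$ with bandwidths summing to $BW_{tot}$, the SP's revenue is $|S|(r-c_1b)-c_3BW_{tot}$. A probability weighting function $w:[0,1]\to[0,1]$ is a continuous strictly increasing bijection (e.g. Prelec's $w(p)=\exp(-(-\ln p)^\alpha)$, $\alpha\in(0,1]$). A user offered rate $b$ at price $r$ with bandwidth $BW_i$ accepts under EUT iff $h_i(b)\bar F_{B_i}(b;BW_i)>r$, and under prospect theory (PT) iff $h_i(b)\,w(\bar F_{B_i}(b;BW_i))>r$. Notation: for $q\ge0$, $\bar F^{-1}_{B_i}(q;b)$ is the unique $BW\ge0$ with $\bar F_{B_i}(b;BW)=q$ if $q$ lies in the range of $\bar F_{B_i}(b;\cdot)$ and $+\infty$ otherwise; $w^{-1}(x):=+\infty$ for $x>1$ and $\bar F^{-1}_{B_i}(+\infty;b):=+\infty$. EUT equilibrium data: a rate $b^*=b^*_{1,EUT}>0$ and bandwidths $BW_{i,EUT}\ge0$, $i\in S_{EUT}$, with $\sum_{i}BW_{i,EUT}=BW_{max,EUT}$, such that every $i\in S_{EUT}$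 accepts under EUT the offer of rate $b^*$ at price $r_{EUT}(b^* )$ with bandwidth $BW_{i,EUT}$. *)

(* Defs.v *)
From Stdlib Require Import Reals List Classical ClassicalEpsilon.
Open Scope R_scope.

(* Extended nonnegative values: [Some x] is a real, [None] is +infinity. *)
Definition ext := option R.

Fixpoint esum (l : list ext) : ext :=
  match l with
  | nil => Some 0
  | e :: l' =>
      match e, esum l' with
      | Some a, Some b => Some (a + b)
      | _, _ => None
      end
  end.

Definition ext_le (a : R) (e : ext) : Prop :=
  match e with None => True | Some b => a <= b end.

(* w^{-1}(x): the p in [0,1] with w p = x, and +infinity if none exists
   (in particular for x > 1). *)
Definition winv (w : R -> R) (x : R) : ext :=
  match excluded_middle_informative (exists p, 0 <= p <= 1 /\ w p = x) with
  | left H => Some (proj1_sig (constructive_indefinite_description _ H))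
  | right _ => None
  end.

(* \bar F^{-1}(q;b) for the function F = \bar F_{B_i}(b; .):
   the BW >= 0 with F BW = q if q is in the range, +infinity otherwise,
   and +infinity for q = +infinity. *)
Definition Finv (F : R -> R) (q : ext) : ext :=
  match q with
  | None => None
  | Some q0 =>
      match excluded_middle_informative (exists BW, 0 <= BW /\ F BW = q0) with
      | left H => Some (proj1_sig (constructive_indefinite_description _ H))
      | right _ => None
      end
  end.

Fixpoint lsum (l : list R) : R :=
  match l with nil => 0 | x :: l' => x + lsum l' end.

(* Maximum of a nonempty list (value 0 on the empty list, never used). *)
Fixpoint max_list (l : list R) : R :=
  match l with
  | nil => 0
  | x :: nil => x
  | x :: l' => Rmax x (max_list l')
  end.

Definition revenue (c1 c3 : R) (nusers : nat) (r b BWtot : R) : R :=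
  INR nusers * (r - c1 * b) - c3 * BWtot.

(* Main.v *)
Require Import Defs.
From Stdlib Require Import Reals List Lra Lia ClassicalEpsilon.
Open Scope R_scope.

Lemma max0_lip x y : Rabs (Rmax 0 y - Rmax 0 x) <= Rabs (y - x).
Proof. unfold Rmax, Rabs; repeat destruct Rle_dec; repeat destruct Rcase_abs; lra. Qed.

Lemma ext_cont (F : R -> R) :
  (forall x, 0 <= x -> continue_in F (fun y => 0 <= y) x) ->
  continuity (fun y => F (Rmax 0 y)).
Proof.
  intros HF x eps Heps.
  assert (H0 : 0 <= Rmax 0 x) by apply Rmax_l.
  destruct (HF _ H0 eps Heps) as [d [Hd H]].
  exists d; split; [exact Hd|].
  intros y [_ Hy]. simpl in *. unfold R_dist in *.
  destruct (Req_dec (Rmax 0 y) (Rmax 0 x)) as [E|E].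
  - rewrite E. unfold Rminus; rewrite Rplus_opp_r, Rabs_R0; lra.
  - apply (H (Rmax 0 y)). split.
    + split; [apply Rmax_l| intro; apply E; congruence].
    + simpl; unfold R_dist. pose proof (max0_lip x y); lra.
Qed.

Lemma IVT_F (F : R -> R) p B :
  (forall x, 0 <= x -> continue_in F (fun y => 0 <= y) x) ->
  F 0 = 0 -> 0 <= p -> 0 <= B -> p < F B ->
  exists z, 0 <= z <= B /\ F z = p.
Proof.
  intros HF H0 Hp HB HpB.
  assert (Hc : continuity (fun y => F (Rmax 0 y) - p)).
  { apply continuity_minus; [apply ext_cont; auto| apply continuity_const; intros ? ?; auto]. }
  destruct (IVT_cor _ 0 B Hc HB) as [z [Hz Ez]].
  - rewrite !Rmax_right by lra. rewrite H0. nra.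
  - exists z; split; auto. rewrite Rmax_right in Ez by lra. lra.
Qed.

Lemma winv_some w x : (exists p, 0 <= p <= 1 /\ w p = x) ->
  exists p, winv w x = Some p /\ 0 <= p <= 1 /\ w p = x.
Proof.
  intros H. unfold winv. destruct (ClassicalEpsilon.excluded_middle_informative _) as [H'|H']; [|contradiction].
  destruct (constructive_indefinite_description _ H') as [p Hp]. simpl. eauto.
Qed.

Lemma Finv_some F q : (exists x, 0 <= x /\ F x = q) ->
  exists x, Finv F (Some q) = Some x /\ 0 <= x /\ F x = q.
Proof.
  intros H. unfold Finv. destruct (ClassicalEpsilon.excluded_middle_informative _) as [H'|H']; [|contradiction].
  destruct (constructive_indefinite_description _ H') as [p Hp]. simpl. eauto.
Qed.

Lemma esum_lt (f : nat -> ext) (BW : nat -> R) (l : list nat) :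
  (forall i, In i l -> exists x, f i = Some x /\ x < BW i) ->
  exists s, esum (map f l) = Some s /\ s <= lsum (map BW l) /\
            (l <> nil -> s < lsum (map BW l)).
Proof.
  induction l as [|a l IH]; intros H.
  - exists 0; simpl; repeat split; try lra; congruence.
  - destruct IH as [s [Es [Hs1 Hs2]]]. { intros; apply H; simpl; auto. }
    destruct (H a (or_introl eq_refl)) as [x [Ex Hx]].
    exists (x + s); simpl; rewrite Ex, Es; repeat split; try intros _; lra.
Qed.

Lemma max_list_ge x l : In x l -> x <= max_list l.
Proof.
  induction l as [|a l IH]; simpl; [tauto|].
  intros [<-|Hx]; destruct l as [|b l'].
  - lra.
  - apply Rmax_l.
  - destruct Hx.
  - eapply Rle_trans; [apply IH; auto| apply Rmax_r].
Qed.

Lemma max_list_lt c l : l <> nil -> (forall x, In x l -> x < c) -> max_list l < c.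
Proof.
  induction l as [|a l IH]; [congruence|]. intros _ H.
  destruct l as [|b l']; simpl.
  - apply H; simpl; auto.
  - apply Rmax_lub_lt; [apply H; simpl; auto|].
    change (max_list (b :: l') < c). apply IH; [congruence|]. intros; apply H; simpl; auto.
Qed.

(* Users of S_EUT are indexed by 0, ..., n-1 (n >= 1). *)
Theorem theorem3
  (n : nat) (h : nat -> R -> R) (Fbar : nat -> R -> R -> R)
  (r_EUT : R -> R) (w : R -> R) (c1 c3 : R)
  (bstar BWmax : R) (BW : nat -> R) (r_PT : R)
  (Hn : (1 <= n)%nat)
  (Hc1 : 0 < c1) (Hc3 : 0 < c3)
  (Hh : forall i b, 0 < b -> 0 < h i b)
  (HF_range : forall i b x, 0 < b -> 0 <= x -> 0 <= Fbar i b x < 1)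
  (HF_0 : forall i b, 0 < b -> Fbar i b 0 = 0)
  (HF_incr : forall i b x y, 0 < b -> 0 <= x -> x < y -> Fbar i b x < Fbar i b y)
  (HF_cont : forall i b x, 0 < b -> 0 <= x ->
               continue_in (Fbar i b) (fun y => 0 <= y) x)
  (Hr : forall b, 0 < b -> 0 < r_EUT b)
  (Hw_range : forall p, 0 <= p <= 1 -> 0 <= w p <= 1)
  (Hw_incr : forall p q, 0 <= p -> p < q -> q <= 1 -> w p < w q)
  (Hw_surj : forall y, 0 <= y <= 1 -> exists p, 0 <= p <= 1 /\ w p = y)
  (Hw_cont : forall p, 0 <= p <= 1 -> continue_in w (fun q => 0 <= q <= 1) p)
  (Hb : 0 < bstar)
  (HBW : forall i, (i < n)%nat -> 0 <= BW i)
  (HBWmax : BWmax = lsum (map BW (seq 0 n)))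
  (HEUT : forall i, (i < n)%nat ->
            h i bstar * Fbar i bstar (BW i) > r_EUT bstar)
  (Hinsuff : ext_le BWmax
               (esum (map (fun i => Finv (Fbar i bstar)
                                         (winv w (r_EUT bstar / h i bstar)))
                          (seq 0 n))))
  (Hunder : forall i, (i < n)%nat ->
              w (Fbar i bstar (BW i)) < Fbar i bstar (BW i))
  (HPT : forall i, (i < n)%nat ->
           h i bstar * w (Fbar i bstar (BW i)) > r_PT) :
  let L_RRM := max_list (map (fun i => r_EUT bstar - h i bstar * w (Fbar i bstar (BW i)))
                             (seq 0 n)) in
  r_EUT bstar - r_PT > L_RRM /\ L_RRM >= 0 /\
  revenue c1 c3 n (r_EUT bstar) bstar BWmax / INR n
    - revenue c1 c3 n r_PT bstar BWmax / INR n > L_RRM.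
Proof.
  intros L.
  assert (Hne : seq 0 n <> nil) by (destruct n; [lia|simpl; congruence]).
  assert (HmapNe : forall (f : nat -> R), map f (seq 0 n) <> nil)
    by (intros f; destruct n; [lia|simpl; congruence]).
  assert (H1 : r_EUT bstar - r_PT > L).
  { apply max_list_lt; [apply HmapNe|].
    intros x Hx. apply in_map_iff in Hx as [i [<- Hi]]. apply in_seq in Hi.
    specialize (HPT i ltac:(lia)). lra. }
  split; [exact H1|split].
  - apply Rnot_lt_ge; intro HL.
    assert (Hall : forall i, (i < n)%nat ->
              h i bstar * w (Fbar i bstar (BW i)) > r_EUT bstar).
    { intros i Hi.
      assert (Hin : In (r_EUT bstar - h i bstar * w (Fbar i bstar (BW i)))
                       (map (fun i => r_EUT bstar - h i bstar * w (Fbar i bstar (BW i))) (seq 0 n))).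
      { apply in_map_iff; exists i; split; auto; apply in_seq; lia. }
      pose proof (max_list_ge _ _ Hin). fold L in H. lra. }
    destruct (esum_lt (fun i => Finv (Fbar i bstar) (winv w (r_EUT bstar / h i bstar))) BW (seq 0 n))
      as [s [Es [_ Hs]]].
    + intros i Hi. apply in_seq in Hi. assert (Hi' : (i < n)%nat) by lia.
      pose proof (Hall i Hi') as Ha. pose proof (Hh i bstar Hb) as Hhi.
      pose proof (HBW i Hi') as HB.
      pose proof (HF_range i bstar (BW i) Hb HB) as HFr.
      set (Fi := Fbar i bstar (BW i)) in *.
      assert (HwF : 0 <= w Fi <= 1) by (apply Hw_range; lra).
      pose proof (Hr bstar Hb) as Hrp.
      assert (Hq : 0 <= r_EUT bstar / h i bstar <= 1).
      { split. apply Rlt_le, Rdiv_lt_0_compat; lra.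
        apply Rmult_le_reg_r with (h i bstar); [lra|].
        unfold Rdiv; rewrite Rmult_assoc, Rinv_l by lra. nra. }
      destruct (winv_some w _ (Hw_surj _ Hq)) as [p [Ep [Hp Hwp]]].
      assert (Hlt : r_EUT bstar / h i bstar < w Fi).
      { apply Rmult_lt_reg_r with (h i bstar); [lra|].
        unfold Rdiv; rewrite Rmult_assoc, Rinv_l by lra. nra. }
      assert (HpF : p < Fi).
      { destruct (Rlt_or_le p Fi) as [|Hle]; auto.
        destruct (Rle_lt_or_eq_dec _ _ Hle) as [Hl|Heq].
        - pose proof (Hw_incr Fi p ltac:(lra) Hl ltac:(lra)). lra.
        - subst Fi. rewrite Heq in Hlt. lra. }
      destruct (IVT_F (Fbar i bstar) p (BW i) (fun x hx => HF_cont i bstar x Hb hx) (HF_0 i bstar Hb)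
                  ltac:(lra) HB HpF) as [z [Hz Fz]].
      destruct (Finv_some (Fbar i bstar) p ltac:(exists z; split; [lra|exact Fz]))
        as [x [Ex [Hx Fx]]].
      exists x. rewrite Ep, Ex. split; auto.
      destruct (Rlt_or_le x (BW i)) as [|Hle]; auto.
      destruct (Rle_lt_or_eq_dec _ _ Hle) as [Hl|Heq].
      * pose proof (HF_incr i bstar (BW i) x Hb HB Hl). subst Fi. lra.
      * subst Fi. rewrite <- Heq in Fx. lra.
    + rewrite Es in Hinsuff. simpl in Hinsuff. rewrite <- HBWmax in Hs.
      specialize (Hs Hne). lra.
  - unfold revenue.
    assert (Hn0 : INR n <> 0) by (apply not_0_INR; lia).
    replace ((INR n * (r_EUT bstar - c1 * bstar) - c3 * BWmax) / INR n -
             (INR n * (r_PT - c1 * bstar) - c3 * BWmax) / INR n)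
      with (r_EUT bstar - r_PT) by (field; exact Hn0).
    exact H1.
Qed.
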